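(* Let $n=2m-1$ with $m\ge1$ and let $Q$ be the $(n+1)\times(n+1)$ matrix with entries $Q_{ij}=0$ if $i+j<n+2$ and $Q_{ij}=(q-1+\delta_{i+j,n+2})q^{\frac12(n^2-n)+j-2}$ if $i+j\ge n+2$ (the quotient matrix of the opposition graph on maximal flags of $\mathrm{PG}(n,q)$ with respect to the types relative to a fixed point). For $j\in[m]$ let $$v_j=(\underbrace{0,\dots,0}_{m-j},\underbrace{q^j,\dots,q^j}_{j},\underbrace{-1,\dots,-1}_{j},\underbrace{0,\dots,0}_{m-j})^\top.$$ Then $v_j$ is an eigenvector of $Q$ with eigenvalue $-q^{(n^2-1)/2}$.
   Context: $\delta$ is the Kronecker delta; $[m]=\{1,\dots,m\}$. *)

(* Defs.v *)
From HB Require Import structures.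
From mathcomp Require Import all_boot all_order all_algebra.
Set Implicit Arguments. Unset Strict Implicit. Unset Printing Implicit Defensive.
Import Order.TTheory GRing.Theory Num.Theory.
Local Open Scope ring_scope.

(* Indices are 0-based: row/column i : 'I_(n.+1) corresponds to the paper's
   index i+1 in {1,...,n+1}. *)

Definition delta (a b : nat) : rat := if a == b then 1 else 0.

Definition Qmat (n q : nat) : 'M[rat]_(n.+1) :=
  \matrix_(i < n.+1, j < n.+1)
    let i1 := (i : nat).+1 in let j1 := (j : nat).+1 in
    if (i1 + j1 < n + 2)%N then 0
    else ((q%:R - 1 + delta (i1 + j1) (n + 2)) *
          (q%:R : rat) ^ ((((n ^ 2 - n) %/ 2)%N)%:Z + (j1%:Z) - 2%:Z)).

Definition vvec (n m q j : nat) : 'cV[rat]_(n.+1) :=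
  \col_(k < n.+1)
    if ((k : nat) < m - j)%N then 0
    else if ((k : nat) < m)%N then (q%:R : rat) ^+ j
    else if ((k : nat) < m + j)%N then -1
    else 0.

Definition prime_power (q : nat) : Prop := exists p k, prime p /\ (0 < k)%N /\ q = (p ^ k)%N.

(* Main.v *)
Require Import Defs.
From HB Require Import structures.
From mathcomp Require Import all_boot all_order all_algebra zify ring lra.
Import Order.TTheory GRing.Theory Num.Theory.
Local Open Scope ring_scope.
Definition vn (x : rat) (m t k : nat) : rat :=
  if (k < m - t)%N then 0 else if (k < m)%N then x ^+ t
  else if (k < m + t)%N then -1 else 0.

Definition gg (x : rat) (m t s : nat) : rat :=
  if (s < m - t)%N then 0 else if (s < m)%N then x ^+ m - x ^+ (s + t)
  else if (s < m + t)%N then x ^+ s - x ^+ (m + t) else 0.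

Definition FF (x : rat) (m t s : nat) : rat :=
  \sum_(s <= k < (2 * m)%N) x ^+ k * vn x m t k.

Lemma lemA x m t d s : (1 <= t <= m)%N -> (s + d = 2 * m)%N ->
  (x - 1) * FF x m t s = gg x m t s.
Proof.
move=> ht; elim: d s => [|d IH] s hs.
  rewrite /FF big_geq; last by lia.
  rewrite /gg mulr0; do 3 (case: ifP => ?; first lia); by [].
rewrite /FF big_ltn; last by lia.
rewrite mulrDr -/(FF x m t s.+1) IH; last by lia.
rewrite /gg /vn.
have [h1|h1] := ltnP s (m - t).
  idtac. have [h2|h2] := ltnP s.+1 (m - t); first by rewrite mulr0 mulr0 addr0.
  try (rewrite (_ : (s.+1 < m - t)%N = false); last by lia). try (rewrite (_ : (s.+1 < m)%N); last by lia).
  have -> : (s.+1 + t = m)%N by lia. by rewrite subrr mulr0 mulr0 addr0.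
try (rewrite (_ : (s.+1 < m - t)%N = false); last by lia).
have [h2|h2] := ltnP s m.
  have [h3|h3] := ltnP s.+1 m.
    rewrite addSn exprS exprD; ring.
  try (rewrite (_ : (s.+1 < m)%N = false); last by lia). try (rewrite (_ : (s.+1 < m + t)%N); last by lia).
  have -> : m = s.+1 by lia. rewrite addSn !exprS exprD; ring.
try (rewrite (_ : (s.+1 < m)%N = false); last by lia).
have [h3|h3] := ltnP s (m + t).
  have [h4|h4] := ltnP s.+1 (m + t).
    rewrite exprS; ring.
  try (rewrite (_ : (s.+1 < m + t)%N = false); last by lia). have -> : (m + t = s.+1)%N by lia. rewrite exprS; ring.
try (rewrite (_ : (s < m + t)%N = false); last by lia). try (rewrite (_ : (s.+1 < m + t)%N = false); last by lia).
by rewrite !mulr0 addr0.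
Qed.

Lemma lemC x m t s : (1 <= t <= m)%N -> (s < 2 * m)%N ->
  x * gg x m t s - gg x m t s.+1 = - ((x - 1) * x ^+ m * vn x m t (2 * m - 1 - s)).
Proof.
move=> ht hs; rewrite /gg /vn.
have [h1|h1] := ltnP s (m - t).
  have [h2|h2] := ltnP s.+1 (m - t).
    try (rewrite (_ : (2 * m - 1 - s < m - t)%N = false); last by lia).
    try (rewrite (_ : (2 * m - 1 - s < m)%N = false); last by lia).
    try (rewrite (_ : (2 * m - 1 - s < m + t)%N = false); last by lia).
    by rewrite !mulr0 subr0 oppr0.
  try (rewrite (_ : (s.+1 < m)%N); last by lia).
  try (rewrite (_ : (2 * m - 1 - s < m - t)%N = false); last by lia).
  try (rewrite (_ : (2 * m - 1 - s < m)%N = false); last by lia).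
  try (rewrite (_ : (2 * m - 1 - s < m + t)%N = false); last by lia).
  have -> : (s.+1 + t = m)%N by lia. by rewrite subrr !mulr0 subr0 oppr0.
have [h2|h2] := ltnP s m.
  try (rewrite (_ : (2 * m - 1 - s < m - t)%N = false); last by lia).
  try (rewrite (_ : (2 * m - 1 - s < m)%N = false); last by lia).
  try (rewrite (_ : (2 * m - 1 - s < m + t)%N); last by lia).
  try (rewrite (_ : (s.+1 < m - t)%N = false); last by lia).
  have [h3|h3] := ltnP s.+1 m.
    rewrite addSn exprS exprD; ring.
  try (rewrite (_ : (s.+1 < m + t)%N); last by lia).
  have -> : m = s.+1 by lia. rewrite addSn !exprS exprD; ring.
try (rewrite (_ : (s.+1 < m - t)%N = false); last by lia).
try (rewrite (_ : (s.+1 < m)%N = false); last by lia).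
have [h3|h3] := ltnP s (m + t).
  try (rewrite (_ : (2 * m - 1 - s < m - t)%N = false); last by lia).
  try (rewrite (_ : (2 * m - 1 - s < m)%N); last by lia).
  have [h4|h4] := ltnP s.+1 (m + t).
    rewrite exprS exprD; ring.
  have E : (m + t = s.+1)%N by lia. rewrite -mulrA -exprD E exprS; ring.
try (rewrite (_ : (2 * m - 1 - s < m - t)%N); last by lia).
try (rewrite (_ : (s.+1 < m + t)%N = false); last by lia).
by rewrite !mulr0 subr0 oppr0.
Qed.

Lemma lemB x m t s : (s < 2 * m)%N ->
  \sum_(s <= k < (2 * m)%N) (if k == s then x else x - 1) * (x ^+ k * vn x m t k)
  = x * FF x m t s - FF x m t s.+1.
Proof.
move=> hs; rewrite /FF [in LHS]big_ltn // [X in x * X]big_ltn // eqxx.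
rewrite (eq_big_nat _ _ (F2 := fun k => (x - 1) * (x ^+ k * vn x m t k))); last first.
  by move=> k /andP[hk _]; rewrite ifF //; apply/negbTE; rewrite neq_ltn hk orbT.
rewrite -mulr_sumr; ring.
Qed.

Theorem mainTheorem4 (m n q : nat) (hm : (1 <= m)%N) (hn : n = (2 * m - 1)%N)
  (hq : prime_power q) (j : nat) (hj : (1 <= j <= m)%N) :
  vvec n m q j != 0 /\
  Qmat n q *m vvec n m q j = (- (q%:R : rat) ^+ ((n ^ 2 - 1) %/ 2)) *: vvec n m q j.
Proof.
have hq2 : (2 <= q)%N.
  case: hq => p [k [pp [hk ->]]].
  have p2 := prime_gt1 pp.
  by rewrite -(expn1 2) (leq_trans (leq_pexp2l _ hk)) ?leq_exp2r //; lia.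
set x := (q%:R : rat).
have x0 : x != 0 by rewrite pnatr_eq0; lia.
have x1 : x - 1 != 0 by rewrite subr_eq0 (_ : 1 = 1%:R) // eqr_nat; lia.
split.
  apply/eqP => H.
  have := congr1 (fun M : 'cV_(n.+1) => M (inord (m - 1)) 0) H.
  rewrite !mxE inordK; last by lia.
  rewrite ifF; last by lia. rewrite ifT; last by lia.
  by apply/eqP; rewrite expf_neq0.
apply/matrixP => i k0; rewrite ord1 mxE [in RHS]mxE [in RHS]mxE.
rewrite -[X in _ * X]/(vn x m j i).
set E := ((n ^ 2 - n) %/ 2)%N.
set c := x ^ (E%:Z - 1).
have hT : forall k : 'I_n.+1, Qmat n q i k * vvec n m q j k 0 =
   (if (n - i <= k)%N then c * ((if (k:nat) == (n - i)%N then x else x - 1) * (x ^+ k * vn x m j k)) else 0).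
  move=> k; have hi := ltn_ord i; have hk := ltn_ord k; rewrite !mxE /=.
  rewrite -/x -/E -/(vn x m j k).
  case: ifP => h.
    by rewrite ifF ?mul0r //; lia.
  rewrite ifT; last by lia.
  rewrite /delta /c (_ : (E%:Z + (k.+1)%:Z - 2%:Z = (E%:Z - 1) + (k : nat)%:Z)); last by lia.
  rewrite expfzDr //.
  have [e|ne] := eqVneq (k : nat) (n - i)%N.
    rewrite (_ : (i.+1 + k.+1 == n + 2)%N); last by lia.
    rewrite /= -exprnP; ring.
  rewrite (_ : (i.+1 + k.+1 == n + 2)%N = false); last by lia.
  rewrite /= -exprnP; ring.
have hi := ltn_ord i.
rewrite (eq_bigr _ (fun k _ => hT k)).
rewrite -(big_mkord xpredT (fun k => if (n - i <= k)%N then c * ((if k == (n - i)%N then x else x - 1) * (x ^+ k * vn x m j k)) else 0)).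
rewrite (big_cat_nat _ (n := (n - i)%N)) //=; last by lia.
rewrite big_nat_cond big1 ?add0r; last first.
  by move=> k /andP[/andP[_ hk] _]; rewrite ifF //; lia.
rewrite (eq_big_nat _ _ (F2 := fun k => c * ((if k == (n - i)%N then x else x - 1) * (x ^+ k * vn x m j k)))); last first.
  by move=> k /andP[hk _]; rewrite hk.
move: hi; set i1 := nat_of_ord i; clearbody i1; clear hT => hi.
rewrite -mulr_sumr (_ : n.+1 = 2 * m)%N; last by lia.
rewrite lemB; last by lia.
apply: (mulfI x1).
rewrite mulrCA mulrBr mulrA (mulrC (x - 1) x) -mulrA.
rewrite (lemA x m j (2 * m - (n - i1)) (n - i1)); [|lia|lia].
rewrite (lemA x m j (2 * m - (n - i1).+1) (n - i1).+1); [|lia|lia].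
rewrite lemC; [|lia|lia].
have -> : (2 * m - 1 - (n - i1) = i1)%N by lia.
have hc : c * x ^+ m = x ^+ ((n ^ 2 - 1) %/ 2).
  have h1 : ((n ^ 2 - n) %/ 2 = (2 * m - 1) * (m - 1))%N.
    rewrite (_ : (n ^ 2 - n = (2 * m - 1) * (m - 1) * 2)%N) ?mulnK //; nia.
  have h2 : ((n ^ 2 - 1) %/ 2 = 2 * m * (m - 1))%N.
    rewrite (_ : (n ^ 2 - 1 = m * (m - 1) * 2 * 2)%N) ?mulnK; [nia|done|nia].
  have h3 : ((2 * m - 1) * (m - 1) + m = 2 * m * (m - 1) + 1)%N by nia.
  rewrite /c /E !exprnP -expfzDr // h1 h2; congr (_ ^ _).
  move: h3; set A := ((2 * m - 1) * (m - 1))%N; set B := (2 * m * (m - 1))%N; lia.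
rewrite -hc; ring.
Qed.
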